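(* Let $n$ be a prime, let $\alpha$ be a primitive element of $\mathbb{F}_{2^n}$, identify $\mathbb{F}_2^n$ with $\mathbb{F}_{2^n}$ as $\mathbb{F}_2$-vector spaces, and let $k\ge 2$. Suppose there exists a Steiner structure $\mathbb{S}_2[2,k,n]$ formed by $\frac{2^n-2}{(2^k-1)(2^k-2)n}$ pairwise disjoint coset complete $k$-dimensional subspaces $X_1,\dots,X_N$ (meaning that the set of all subspaces $\alpha^j X_i^{2^\ell}=\{\alpha^j x^{2^\ell}: x\in X_i\}$, $1\le i\le N$, $0\le \ell\le n-1$, $0\le j\le 2^n-2$, is a Steiner structure $\mathbb{S}_2[2,k,n]$). Then there exists a $(2^n-1,2^k-1,1)$ difference family over the group $\mathbb{Z}_{2^n-1}$.
   Context: For $s\in\mathbb{Z}_{2^n-1}$, the cyclotomic coset of $s$ is $C_s=\{s\cdot 2^i \bmod (2^n-1): 0\le i\le n-1\}$ and $\rho(s)=\min C_s$. For a $k$-dimensional subspace $X=\{0,\alpha^{i_1},\dots,\alpha^{i_{2^k-1}}\}$ (exponents in $\mathbb{Z}_{2^n-1}$), $\rho(\Delta(X))=\{\rho(i_r-i_s): r\ne s\}$; $X$ is coset complete if $|\rho(\Delta(X))|=(2^k-1)(2^k-2)$, and coset complete $X,Y$ are disjoint if $\rho(\Delta(X))\cap\rho(\Delta(Y))=\varnothing$. A Steiner structure $\mathbb{S}_2[2,k,n]$ is a set of $k$-dimensional subspaces of $\mathbb{F}_2^n$ such that every $2$-dimensional subspace is contained in exactly one of them. An $(m,w,\lambda)$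 difference family over an additive group $G$ with $|G|=m$ is a set of $w$-subsets of $G$ such that each element of $G\setminus\{0\}$ occurs exactly $\lambda$ times as a difference $a-b$ of two distinct elements $a,b$ lying in a common subset of the family. *)

(* Defs.v *)
From mathcomp Require Import all_boot all_order all_algebra all_field.
Set Implicit Arguments. Unset Strict Implicit. Unset Printing Implicit Defensive.
Import GRing.Theory.
Local Open Scope ring_scope.

Definition rho (n s : nat) : nat :=
  \big[minn/(s %% (2 ^ n - 1))%N]_(i < n) ((s * 2 ^ i) %% (2 ^ n - 1))%N.

Definition dlog (F : finFieldType) (m : nat) (alpha z : F) : nat :=
  find (fun i => alpha ^+ i == z) (iota 0 m).

(* F_2-subspace of F (char 2): contains 0 and closed under addition *)
Definition is_subspace (F : finFieldType) (X : {set F}) : bool :=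
  (0 \in X) && [forall x in X, forall y in X, x + y \in X].

Definition is_ksubspace (F : finFieldType) (k : nat) (X : {set F}) : bool :=
  is_subspace X && (#|X| == 2 ^ k)%N.

Definition steiner_structure (F : finFieldType) (k : nat) (S : {set {set F}}) :=
  (forall X, X \in S -> is_ksubspace k X) /\
  (forall Y : {set F}, is_ksubspace 2 Y -> #|[set X in S | Y \subset X]| = 1%N).

(* rho(Delta(X)) : the set {rho(i_r - i_s) : r <> s}, where x = alpha^(i_r) *)
Definition rhoDelta (F : finFieldType) (n : nat) (alpha : F) (X : {set F}) : seq nat :=
  undup [seq rho n (dlog (2 ^ n - 1) alpha (p.1 / p.2))
        | p <- [seq (x, y) | x <- enum (X :\ 0), y <- enum (X :\ 0)] & p.1 != p.2].

Definition coset_complete (F : finFieldType) (n k : nat) (alpha : F) (X : {set F}) :=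
  size (rhoDelta n alpha X) = ((2 ^ k - 1) * (2 ^ k - 2))%N.

Definition cc_disjoint (F : finFieldType) (n : nat) (alpha : F) (X Y : {set F}) :=
  all (fun a => a \notin rhoDelta n alpha Y) (rhoDelta n alpha X).

Definition difference_family (G : finZmodType) (w lambda : nat) (D : seq {set G}) :=
  uniq D /\ all (fun B : {set G} => #|B| == w)%N D /\
  forall g : G, g != 0 ->
    (\sum_(B <- D) #|[set p : G * G | [&& p.1 \in B, p.2 \in B, p.1 != p.2 & (p.1 - p.2 == g)%R]]|)%N
    = lambda.

(* Main.v *)
Require Import Defs.
From mathcomp Require Import all_boot all_order all_algebra all_field.
From mathcomp Require Import zify ring.
Import GRing.Theory.

Lemma bigmin_le_term (I : eqType) (r : seq I) x0 (F : I -> nat) j :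
  j \in r -> (\big[minn/x0]_(i <- r) F i <= F j)%N.
Proof.
elim: r => // a r IH; rewrite inE big_cons => /orP[/eqP->|/IH H].
  exact: geq_minl.
exact: leq_trans (geq_minr _ _) H.
Qed.

Section NT.
Variable n : nat.
Hypothesis n_gt0 : (0 < n)%N.
Local Notation m := (2 ^ n - 1)%N.

Lemma exp2n_mod : (2 ^ n = 1 %[mod m])%N.
Proof.
have E : (2 ^ n = 1 + m)%N by rewrite addnC subnK // expn_gt0.
by rewrite {1}E modnDr.
Qed.

Lemma mulexp_mod s a : (s * 2 ^ a = s * 2 ^ (a %% n) %[mod m])%N.
Proof.
rewrite -[LHS]modnMmr -[RHS]modnMmr; congr (_ %% _); congr (_ * _).
have -> : (2 ^ a = (2 ^ n) ^ (a %/ n) * 2 ^ (a %% n))%N.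
  by rewrite -expnM (mulnC n) -expnD -divn_eq.
by rewrite -modnMml -modnXm exp2n_mod modnXm exp1n modnMml mul1n.
Qed.

Lemma rho_le s t c : (t = s * 2 ^ c %[mod m])%N -> (rho n s <= rho n t)%N.
Proof.
move=> H.
have [i ->] : exists i : 'I_n, rho n t = (t * 2 ^ i %% m)%N.
  rewrite /rho; apply: (big_ind (fun v => exists i : 'I_n, v = (t * 2 ^ i %% m)%N)).
  - by exists (Ordinal n_gt0); rewrite expn0 muln1.
  - move=> x y [i ->] [j ->]; rewrite /minn; case: ifP => _; by eexists.
  - by move=> i _; exists i.
have -> : (t * 2 ^ i %% m = s * 2 ^ ((c + i) %% n) %% m)%N.
  rewrite -modnMml H modnMml -mulnA -expnD; exact: mulexp_mod.
apply: leq_trans (_ : rho n s <= s * 2 ^ (Ordinal (ltn_pmod (c + i) n_gt0)) %% m)%N _ => //.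
rewrite /rho; apply: bigmin_le_term; exact: mem_index_enum.
Qed.

Lemma modM_congr a b c : (a = b %[mod m] -> a * c = b * c %[mod m])%N.
Proof. by move=> H; rewrite -modnMml H modnMml. Qed.

Lemma l_eq s l l' : prime n -> (l < n)%N -> (l' < n)%N -> (s %% m != 0)%N ->
  (s * 2 ^ l = s * 2 ^ l' %[mod m])%N -> l = l'.
Proof.
move=> pn.
wlog le : l l' / (l <= l')%N.
  move=> W Hl Hl' Hs E; case: (leqP l l') => h; first exact: W.
  symmetry; apply: W => //; exact: ltnW.
move=> Hl Hl' Hs E.
set c := (l' - l)%N.
have cn : (c < n)%N by apply: leq_ltn_trans (leq_subr l l') Hl'.
have Hc : (s = s * 2 ^ c %[mod m])%N.
  have E2 := modM_congr _ _ (2 ^ (n - l)) E.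
  rewrite -!mulnA -!expnD in E2.
  have e1 : (l + (n - l) = n)%N by rewrite subnKC // ltnW.
  have e2 : (l' + (n - l) = c + n)%N by rewrite /c; clear -le Hl Hl'; lia.
  rewrite e1 e2 in E2.
  transitivity (s * 2 ^ n %% m)%N; first by rewrite mulexp_mod modnn expn0 muln1.
  by rewrite E2 mulexp_mod modnDr (modn_small cn).
have [c0|cpos] := eqVneq c 0%N.
  by apply/eqP; rewrite eqn_leq le /= -subn_eq0 -/c c0.
have cop : coprime n c.
  rewrite prime_coprime //; apply/negP => /dvdn_leq.
  by rewrite lt0n cpos leqNgt cn => /(_ isT).
have [a _ Ha] := Bezoutl c (prime_gt0 pn).
rewrite (eqP cop) in Ha.
have It : forall t, (s = s * 2 ^ (c * t) %[mod m])%N.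
  elim => [|t IH]; first by rewrite muln0 expn0 muln1.
  rewrite mulnS expnD mulnA; rewrite [RHS](modM_congr _ _ _ (esym Hc)).
  exact: IH.
have h1 := modM_congr _ _ 2 (It a).
have [q Hq] := dvdnP Ha.
have ex : (2 ^ (c * a) * 2 = 2 ^ (q * n))%N by rewrite -Hq add1n (mulnC c a) expnSr.
rewrite -mulnA ex mulexp_mod modnMl expn0 muln1 in h1.
have : (m %| s * 2 - s)%N by rewrite -eqn_mod_dvd ?h1 // leq_pmulr.
by rewrite muln2 -addnn addnK => /dvdnP [r Hr]; move: Hs; rewrite Hr modnMl.
Qed.


Lemma shift_mod s s' l l' : (l' < n)%N -> (s * 2 ^ l = s' * 2 ^ l' %[mod m])%N ->
  (s' = s * 2 ^ (l + (n - l')) %[mod m])%N.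
Proof.
move=> Hl e.
have e1 : (l' + (n - l') = n)%N by rewrite subnKC // ltnW.
transitivity (s' * 2 ^ (l' + (n - l')) %% m)%N.
  by rewrite e1 mulexp_mod modnn expn0 muln1.
rewrite expnD mulnA.
rewrite [LHS](modM_congr _ _ _ (esym e)).
by rewrite -mulnA -expnD.
Qed.
End NT.

Section Field.
Variables (n : nat) (F : finFieldType) (alpha : F).
Local Notation m := (2 ^ n - 1)%N.
Hypothesis n_gt1 : (1 < n)%N.
Hypothesis cardF : #|F| = (2 ^ n)%N.
Local Open Scope ring_scope.
Hypothesis prim : m.-primitive_root alpha.

Lemma m_gt1 : (1 < m)%N.
Proof.
have : (2 ^ 2 <= 2 ^ n)%N by rewrite leq_exp2l.
rewrite expnS expn1 /=; clear; lia.
Qed.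

Lemma expr_eq a b : (alpha ^+ a == alpha ^+ b) = (a == b %[mod m])%N.
Proof. exact: eq_prim_root_expr. Qed.

Lemma alpha_neq0 : alpha != 0.
Proof.
apply/eqP=> a0; have := prim_expr_order prim; rewrite a0 expr0n.
have : (m != 0)%N by have := m_gt1; clear; lia.
by move/negbTE->; move/eqP; rewrite eq_sym oner_eq0.
Qed.

Lemma dlogK z : z != 0 -> alpha ^+ dlog m alpha z = z.
Proof.
move=> z0.
have zm : z ^+ m = 1.
  apply: (mulfI z0); rewrite mulr1 -exprS.
  have -> : m.+1 = #|F| by rewrite cardF; have := m_gt1; clear; lia.
  exact: expf_card.
have [i ->] := prim_rootP prim zm.
rewrite /dlog.
have Hh : has (fun j => alpha ^+ j == alpha ^+ i) (iota 0 m).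
  by apply/hasP; exists (val i); rewrite ?mem_iota //=.
have := nth_find 0%N Hh; rewrite nth_iota ?add0n => [/eqP //|].
by move: Hh; rewrite has_find size_iota.
Qed.

Lemma fr_inj (l : nat) : (l < n)%N -> injective (fun x : F => x ^+ (2 ^ l)).
Proof.
move=> ln x y /= E.
rewrite -[x]expf_card -[y]expf_card cardF -(subnKC (ltnW ln)) expnD !exprM E.
by [].
Qed.

Definition pw (z : 'Z_m) : F := alpha ^+ (z : nat).

Lemma pw_nat a : pw (a%:R) = alpha ^+ a.
Proof. by apply/eqP; rewrite /pw val_Zp_nat ?m_gt1 // expr_eq modn_mod. Qed.

Lemma pw_inj : injective pw.
Proof.
move=> u v /eqP; rewrite /pw expr_eq.
have Hu : (u < m)%N := leq_trans (ltn_ord u) (eq_leq (Zp_cast m_gt1)).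
have Hv : (v < m)%N := leq_trans (ltn_ord v) (eq_leq (Zp_cast m_gt1)).
by rewrite !modn_small // => /eqP /val_inj.
Qed.

Lemma pwD u v : pw (u + v) = pw u * pw v.
Proof.
have -> : u + v = ((u : nat) + (v : nat))%N%:R by rewrite natrD !natr_Zp.
by rewrite pw_nat exprD.
Qed.

Lemma pw_neq0 u : pw u != 0.
Proof. by rewrite expf_neq0 // alpha_neq0. Qed.

Lemma pwB u v : pw (u - v) = pw u / pw v.
Proof.
by rewrite -{2}(subrK v u) (pwD (u - v) v) mulfK // pw_neq0.
Qed.

Definition E (l : nat) (x : F) : 'Z_m := (dlog m alpha x * 2 ^ l)%N%:R.

Lemma pwE l x : x != 0 -> pw (E l x) = x ^+ (2 ^ l).
Proof. by move=> x0; rewrite /E pw_nat exprM dlogK. Qed.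


Lemma sizeL (A : {set F}) :
  size [seq p <- [seq (a, b) | a <- enum A, b <- enum A] | p.1 != p.2]
  = (#|A| * (#|A| - 1))%N.
Proof.
set L := [seq p <- _ | _].
have U : uniq L.
  rewrite filter_uniq // allpairs_uniq ?enum_uniq //.
  by move=> [a b] [c d] _ _.
rewrite -(card_uniqP U).
have -> : #|L| = #|setX A A :\: [set (a, a) | a in A]|.
  apply: eq_card => -[a b]; rewrite !inE mem_filter /=.
  apply/andP/andP => [[ab /allpairsP [[c d] /= [Hc Hd [ea eb]]]]|].
    subst a b; rewrite !mem_enum in Hc Hd; split; last by rewrite Hc Hd.
    by apply/imsetP => -[e _ [ec ed]]; rewrite ec ed eqxx in ab.
  move=> [nd /andP[Ha Hb]]; split.
    by apply: contra nd => /eqP ->; apply: imset_f; rewrite Hb.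
  by apply/allpairsP; exists (a, b); rewrite !mem_enum.
rewrite cardsD cardsX (setIidPr _).
  by rewrite card_imset ?mulnBr ?muln1 // => x y [].
by apply/subsetP => p /imsetP [a Ha ->]; rewrite in_setX Ha.
Qed.

Variables (k N : nat) (X : 'I_N -> {set F}).
Hypothesis pn : prime n.
Hypothesis k2 : (2 <= k)%N.
Hypothesis Xsub : forall i, is_ksubspace k (X i).
Hypothesis Xcc : forall i, coset_complete n k alpha (X i).
Hypothesis Xdis : forall i j, i != j -> cc_disjoint n alpha (X i) (X j).
Hypothesis St : steiner_structure k
    (\bigcup_i \bigcup_(l < n) \bigcup_(j < 2 ^ n - 1)
        [set [set alpha ^+ j * x ^+ (2 ^ l) | x in X i]]).

Lemma n_gt0 : (0 < n)%N. Proof. exact: prime_gt0. Qed.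

Lemma cardA i : #|X i :\ 0| = (2 ^ k - 1)%N.
Proof.
have := Xsub i; rewrite /is_ksubspace /is_subspace => /andP[/andP[H0 _] /eqP Hc].
by rewrite -Hc (cardsD1 0 (X i)) H0 add1n subn1.
Qed.

Lemma inA0 i z : z \in X i :\ 0 -> z != 0.
Proof. by rewrite !inE => /andP[]. Qed.

Lemma rhoD_mem i x y : x \in X i :\ 0 -> y \in X i :\ 0 -> x != y ->
  rho n (dlog m alpha (x / y)) \in rhoDelta n alpha (X i).
Proof.
move=> Hx Hy Hxy; rewrite /rhoDelta mem_undup; apply/mapP; exists (x, y) => //.
rewrite mem_filter /= Hxy; apply/allpairsP; exists (x, y); by rewrite !mem_enum.
Qed.

Lemma uniq_map_inj (T1 T2 : eqType) (f : T1 -> T2) s :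
  uniq (map f s) -> {in s &, injective f}.
Proof.
elim: s => //= a s IH /andP[Hn Hu] x y; rewrite !inE.
move=> /orP[/eqP->|Hx] /orP[/eqP->|Hy] E //.
- by rewrite E map_f in Hn.
- by rewrite -E map_f in Hn.
- exact: IH.
Qed.

Lemma rhoD_inj i x y x' y' : x \in X i :\ 0 -> y \in X i :\ 0 -> x != y ->
  x' \in X i :\ 0 -> y' \in X i :\ 0 -> x' != y' ->
  rho n (dlog m alpha (x / y)) = rho n (dlog m alpha (x' / y')) -> x = x' /\ y = y'.
Proof.
move=> Hx Hy Hxy Hx' Hy' Hxy' e.
have := Xcc i; rewrite /coset_complete /rhoDelta.
set L := [seq p <- _ | _].
have sL : size L = ((2 ^ k - 1) * (2 ^ k - 2))%N.
  by rewrite /L sizeL cardA -subnDA.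
move=> sU.
have U : uniq [seq rho n (dlog m alpha (p.1 / p.2)) | p <- L].
  by apply/negPn; rewrite -ltn_size_undup size_map sU sL ltnn.
have mL : forall a b, a \in X i :\ 0 -> b \in X i :\ 0 -> a != b -> (a, b) \in L.
  move=> a b Ha Hb Hab; rewrite mem_filter /= Hab; apply/allpairsP.
  by exists (a, b); rewrite !mem_enum.
have := uniq_map_inj _ _ _ _ U _ _ (mL _ _ Hx Hy Hxy) (mL _ _ Hx' Hy' Hxy') e.
by case=> -> ->.
Qed.


Definition Bl (p : 'I_N * 'I_n) : {set 'Z_m} := [set E p.2 x | x in X p.1 :\ 0].

Definition Pd (p : 'I_N * 'I_n) (g : 'Z_m) : {set 'Z_m * 'Z_m} :=
  [set q : 'Z_m * 'Z_m | [&& q.1 \in Bl p, q.2 \in Bl p, q.1 != q.2 & (q.1 - q.2 == g)%R]].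

Lemma memPd p g q : q \in Pd p g -> exists x y,
  [/\ x \in X p.1 :\ 0, y \in X p.1 :\ 0, x != y, q = (E p.2 x, E p.2 y)
    & x ^+ (2 ^ p.2) = pw g * y ^+ (2 ^ p.2)].
Proof.
case: q => q1 q2; rewrite inE /= => /and4P[/imsetP[x Hx ->] /imsetP[y Hy ->] Hne /eqP Hg].
exists x, y; split => //.
  by apply: contraNneq Hne => ->.
have x0 := inA0 _ _ Hx; have y0 := inA0 _ _ Hy.
rewrite -!pwE //.
by rewrite -{1}(subrK (E p.2 y) (E p.2 x)) (pwD (E p.2 x - E p.2 y)) Hg.
Qed.

Lemma uniqPd p p' g q q' : q \in Pd p g -> q' \in Pd p' g -> p = p' /\ q = q'.
Proof.
case: p => i l; case: p' => i' l'.
move=> /memPd[x [y [Hx Hy Hxy -> Hg]]] /memPd[x' [y' [Hx' Hy' Hxy' -> Hg']]] /=.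
simpl in *.
have x0 := inA0 _ _ Hx; have y0 := inA0 _ _ Hy; have x0' := inA0 _ _ Hx'; have y0' := inA0 _ _ Hy'.
have e : (dlog m alpha (x / y) * 2 ^ l = dlog m alpha (x' / y') * 2 ^ l' %[mod m])%N.
  apply/eqP; rewrite -expr_eq !exprM !dlogK ?mulf_neq0 ?invr_eq0 //.
  by rewrite !expr_div_n Hg Hg' !mulfK // expf_neq0.
have r : rho n (dlog m alpha (x / y)) = rho n (dlog m alpha (x' / y')).
  apply/anti_leq/andP; split.
    apply: (rho_le _ n_gt0 _ _ (l + (n - l'))).
    exact: (shift_mod _ _ _ _ _ (ltn_ord l') e).
  apply: (rho_le _ n_gt0 _ _ (l' + (n - l))).
  exact: (shift_mod _ _ _ _ _ (ltn_ord l) (esym e)).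
have mi := rhoD_mem _ _ _ Hx Hy Hxy; have mi' := rhoD_mem _ _ _ Hx' Hy' Hxy'.
have ii : i = i'.
  apply/eqP; apply/negP => /negP ne.
  by have := Xdis _ _ ne; rewrite /cc_disjoint => /allP /(_ _ mi); rewrite r mi'.
subst i'.
have [ex ey] := rhoD_inj _ _ _ _ _ Hx Hy Hxy Hx' Hy' Hxy' r; subst x' y'.
have ll : l = l' :> nat.
  apply: (l_eq _ _ _ _ pn (ltn_ord l) (ltn_ord l') _ e).
  apply/negP => /eqP s0.
  have : alpha ^+ dlog m alpha (x / y) = 1.
    by apply/eqP; rewrite -(expr0 alpha) expr_eq mod0n s0.
  rewrite dlogK ?mulf_neq0 ?invr_eq0 // => h.
  by move: Hxy; rewrite -(divfK y0 x) h mul1r eqxx.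
have -> : l = l' by apply: val_inj.
by [].
Qed.


Lemma char2 : 2%N \in [char F].
Proof. exact: (card_finPcharP cardF). Qed.

Lemma existsPd g : g != 0 -> exists p q, q \in Pd p g.
Proof.
move=> g0.
have H2 : forall z : F, z + z = 0 := addrr_pchar2 char2.
have a1 : pw g != 1.
  apply: contra g0 => /eqP h; apply/eqP/pw_inj; rewrite h.
  by rewrite /pw /= expr0.
have a0 : pw g != 0 := pw_neq0 g.
set a := pw g in a1 a0 *.
set Y : {set F} := 0 |: (1 |: (a |: [set 1 + a])).
have HY : is_ksubspace 2 Y.
  rewrite /is_ksubspace /is_subspace; apply/andP; split; [apply/andP; split|].
  - by rewrite !inE eqxx.
  - apply/forallP => x; apply/implyP => Hx; apply/forallP => y; apply/implyP => Hy.
    move: Hx Hy; rewrite !inE.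
    move=> /or4P[] /eqP-> /or4P[] /eqP->.
    all: rewrite ?(add0r, addr0, H2, addrA, eqxx, orbT) /=.
    all: rewrite ?(addrC a 1) ?(addrAC 1 a 1) -?(addrA 1 a a) ?H2 ?add0r ?addr0 ?eqxx ?orbT //.
  - have f3 : (0 == 1 + a) = false.
      apply/negbTE; apply: contra a1 => /eqP h.
      by rewrite -[a]addr0 h addrCA H2 addr0.
    have f5 : (1 == 1 + a) = false.
      by rewrite -{1}[1]addr0 (inj_eq (addrI 1)) eq_sym (negbTE a0).
    have f6 : (a != 1 + a).
      by rewrite -{1}[a]add0r (inj_eq (addIr a)) eq_sym oner_eq0.
    rewrite !cardsU1 cards1 !inE f3 f5 f6 (eq_sym 0 1) oner_eq0 (eq_sym 0 a) (negbTE a0).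
    by rewrite (eq_sym 1 a) (negbTE a1).
have [_ Su] := St.
have /cards1P [X' EX'] := introT eqP (Su Y HY).
have : X' \in [set X'] by rewrite set11.
rewrite -EX' inE => /andP[/bigcupP[i _ /bigcupP[l _ /bigcupP[j _ /set1P XE]]] YX].
subst X'.
have : 1 \in Y by rewrite !inE eqxx orbT.
move/(subsetP YX)/imsetP => [x Hx e1].
have : a \in Y by rewrite !inE eqxx !orbT.
move/(subsetP YX)/imsetP => [y Hy ea].
have pl : (0 < 2 ^ l)%N by rewrite expn_gt0.
have x0 : x != 0.
  have : x ^+ (2 ^ l) != 0.
    by apply/eqP => h; move: e1; rewrite h mulr0 => /eqP; rewrite oner_eq0.
  by apply: contraNneq => ->; rewrite expf_eq0 pl eqxx.
have y0 : y != 0.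
  have : y ^+ (2 ^ l) != 0.
    by apply/eqP => h; move: ea; rewrite h mulr0 => h'; rewrite h' eqxx in a0.
  by apply: contraNneq => ->; rewrite expf_eq0 pl eqxx.
have aj : alpha ^+ j != 0 by rewrite expf_neq0 // alpha_neq0.
have xi : x ^+ (2 ^ l) = (alpha ^+ j)^-1.
  by apply: (mulfI aj); rewrite -e1 divff.
have xy : y != x.
  by apply: contra a1 => /eqP xy; rewrite ea e1 xy.
exists (i, l), (E l y, E l x).
rewrite inE /=; apply/and4P; split.
- by apply: imset_f; rewrite !inE y0 Hy.
- by apply: imset_f; rewrite !inE x0 Hx.
- apply/negP => /eqP /(congr1 pw); rewrite !pwE // => /(fr_inj _ (ltn_ord l)) h.
  by rewrite h eqxx in xy.
- apply/eqP/pw_inj; rewrite pwB !pwE // xi invrK -/a ea mulrC.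
  by [].
Qed.


Lemma EneqE (p : 'I_N * 'I_n) x y : x \in X p.1 :\ 0 -> y \in X p.1 :\ 0 -> x != y -> E p.2 x != E p.2 y.
Proof.
move=> Hx Hy xy; apply/negP => /eqP /(congr1 pw).
rewrite !pwE ?(inA0 _ _ Hx) ?(inA0 _ _ Hy) // => /(fr_inj _ (ltn_ord p.2)) h.
by rewrite h eqxx in xy.
Qed.

Lemma main_df : exists D : seq {set 'Z_m}, difference_family (2 ^ k - 1) 1 D.
Proof.
exists (map Bl (index_enum _)).
rewrite /difference_family; split; [|split].
- rewrite map_inj_uniq ?index_enum_uniq // => p p' eB.
  have : (1 < #|X p.1 :\ (0 : F)%R|)%N.
    rewrite cardA; have : (2 ^ 2 <= 2 ^ k)%N by rewrite leq_exp2l.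
    by rewrite expnS expn1 /=; clear; lia.
  move/card_gt1P => [x [y [Hx Hy xy]]].
  have Hq : (E p.2 x, E p.2 y) \in Pd p (E p.2 x - E p.2 y).
    by rewrite inE /= !imset_f // eqxx EneqE.
  have Hq' : (E p.2 x, E p.2 y) \in Pd p' (E p.2 x - E p.2 y) by rewrite /Pd -eB.
  by case: (uniqPd _ _ _ _ _ Hq Hq').
- apply/allP => B /mapP [p _ ->]; rewrite card_in_imset ?cardA //.
  move=> x y Hx Hy /(congr1 pw); rewrite !pwE ?(inA0 _ _ Hx) ?(inA0 _ _ Hy) //.
  exact: (fr_inj _ (ltn_ord p.2)).
move=> g g0; rewrite big_map.
rewrite (eq_bigr (fun p => #|Pd p g|)); last by move=> p _; rewrite /Pd.
have [p0 [q0 Hq0]] := existsPd _ g0.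
rewrite (bigD1 p0) //= big1 ?addn0.
  apply/eqP/cards1P; exists q0; apply/setP => q; rewrite inE.
  apply/idP/eqP => [Hq|->//]; by case: (uniqPd _ _ _ _ _ Hq Hq0).
move=> p np; apply/eqP; rewrite cards_eq0; apply/eqP/setP => q; rewrite in_set0.
apply/negbTE/negP => Hq; case: (uniqPd _ _ _ _ _ Hq Hq0) => e _.
by rewrite e eqxx in np.
Qed.

End Field.

Local Open Scope ring_scope.

Theorem theorem4 (n k : nat) (F : finFieldType) (alpha : F)
  (X : 'I_((2 ^ n - 2) %/ ((2 ^ k - 1) * (2 ^ k - 2) * n)) -> {set F}) :
  prime n -> #|F| = (2 ^ n)%N -> (2 ^ n - 1).-primitive_root alpha -> (2 <= k)%N ->
  (forall i, is_ksubspace k (X i)) ->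
  (forall i, coset_complete n k alpha (X i)) ->
  (forall i j, i != j -> cc_disjoint n alpha (X i) (X j)) ->
  steiner_structure k
    (\bigcup_i \bigcup_(l < n) \bigcup_(j < 2 ^ n - 1)
        [set [set alpha ^+ j * x ^+ (2 ^ l) | x in X i]]) ->
  exists D : seq {set 'Z_(2 ^ n - 1)}, difference_family (2 ^ k - 1) 1 D.
Proof.
move=> pn cardF prim k2 Xsub Xcc Xdis St.
exact: (main_df _ _ _ (prime_gt1 pn) cardF prim _ _ X pn k2 Xsub Xcc Xdis St).
Qed.
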